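(* Let $H$ be an infinite-dimensional separable complex Hilbert space with orthonormal basis $(e_i)_{i\in\mathbb{N}}$, and let $D=\sum_{i\in\mathbb{N}}\lambda_i\, e_i\otimes e_i$ be a bounded diagonal operator such that $\lambda_i\neq\lambda_j$ for all $i\neq j$ and such that $\sigma(D)$ is a perfect compact set. Then there exists a vector $u\in H$ such that (1) $\langle u,e_i\rangle\neq 0$ for all $i\in\mathbb{N}$, and (2) for all $z\in\sigma(D)\setminus\sigma_p(D)$, $$\sum_{i\in\mathbb{N}}\frac{|\langle u,e_i\rangle|^2}{|z-\lambda_i|^2}=\infty.$$
   Context: For $u,v\in H$, $u\otimes v$ denotes the operator $h\mapsto\langle h,v\rangle u$, so $De_i=\lambda_i e_i$. $\sigma(D)$ is the spectrum of $D$ (here the closure of $\{\lambda_i\}$) and $\sigma_p(D)=\{\lambda_i:i\in\mathbb{N}\}$ its set of eigenvalues. A set is perfect if it has no isolated points. *)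

(* Defs.v *)
(* C = R[i] (mathcomp-real-closed complex
   numbers over a realType R); its topology is the one induced by the complex
   modulus (numFieldType normed structure from mathcomp-analysis). *)
From mathcomp Require Import all_boot all_order all_algebra.
From mathcomp Require Import all_classical all_reals all_analysis.
From mathcomp Require Import complex.
Import Order.TTheory GRing.Theory Num.Theory.
Import numFieldNormedType.Exports.
Set Implicit Arguments. Unset Strict Implicit. Unset Printing Implicit Defensive.
Local Open Scope classical_set_scope.
Local Open Scope ring_scope.

Definition Cx (R : realType) : numFieldType := R[i].

Definition cmod (R : realType) (z : Cx R) : R := ComplexField.Normc.normc z.

(* Coordinates of a vector of H in the orthonormal basis (e_i): H is identified
   with l^2(N) via u |-> (<u, e_i>)_i.  A coefficient sequence is in H iff it is
   square summable. *)
Definition l2 (R : realType) : set (nat -> Cx R) :=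
  [set c | (\sum_(0 <= i <oo) ((cmod (c i) ^+ 2)%:E) < +oo)%E].

Definition bounded_diag (R : realType) (lam : nat -> Cx R) : Prop :=
  exists M : R, forall i, cmod (lam i) <= M.

Definition spec_diag (R : realType) (lam : nat -> Cx R) : set (Cx R) :=
  closure (range lam).

Definition pspec_diag (R : realType) (lam : nat -> Cx R) : set (Cx R) :=
  range lam.

(* Main.v *)
Require Import Defs.
From mathcomp Require Import all_boot all_order all_algebra.
From mathcomp Require Import all_classical all_reals all_analysis.
From mathcomp Require Import complex lra ring zify.
Import Order.TTheory GRing.Theory Num.Theory.
Import numFieldNormedType.Exports.
Local Open Scope classical_set_scope.
Local Open Scope ring_scope.
Set Implicit Arguments. Unset Strict Implicit. Unset Printing Implicit Defensive.

Lemma aux1 a n : (a + n <= a + 2 * n)%N. Proof. lia. Qed.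
Lemma aux2 a n : (a + n + n <= a + 2 * n)%N. Proof. lia. Qed.

Section Grid.
Variables (R : realType) (h X Y : R) (phi : nat -> nat -> R).
Hypothesis h0 : 0 < h.
Hypothesis phi0 : forall a b, 0 <= phi a b.
Hypothesis Hphi : forall a b (N : nat), (0 < N)%N ->
  `|X - a%:R * h| <= N%:R * h -> `|Y - b%:R * h| <= N%:R * h ->
  (25 * N%:R ^+ 2)^-1 <= phi a b.

Lemma in_sq (a0 a n : nat) (x : R) : a0%:R * h <= x -> x < (a0 + n)%:R * h ->
  (a0 <= a)%N -> (a <= a0 + n)%N -> `|x - a%:R * h| <= n%:R * h.
Proof.
move=> h1 h2 l1 l2.
have e1 : a0%:R * h <= a%:R * h by rewrite ler_pM2r // ler_nat.
have e2 : a%:R * h <= (a0 + n)%:R * h by rewrite ler_pM2r // ler_nat.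
move: h2 e2; rewrite natrD mulrDl => h2 e2.
rewrite ler_norml; apply/andP; split; lra.
Qed.

Lemma grid_quadrant (a0 b0 a1 b1 n : nat) : (0 < n)%N ->
  a0%:R * h <= X -> X < (a0 + 2 * n)%:R * h ->
  b0%:R * h <= Y -> Y < (b0 + 2 * n)%:R * h ->
  (a0 <= a1)%N -> (a1 + n <= a0 + 2 * n)%N ->
  (b0 <= b1)%N -> (b1 + n <= b0 + 2 * n)%N ->
  1 / 100 <= \sum_(a1 <= a < a1 + n) \sum_(b1 <= b < b1 + n) phi a b.
Proof.
move=> n0 hx1 hx2 hy1 hy2 la1 la2 lb1 lb2.
have -> : 1 / 100 = \sum_(a1 <= a < a1 + n) \sum_(b1 <= b < b1 + n)
                       (25 * (2 * n)%:R ^+ 2)^-1 :> R.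
  rewrite !sumr_const_nat !addKn -mulr_natr -mulr_natr natrM.
  have : (n%:R : R) != 0 by rewrite pnatr_eq0 -lt0n.
  by move=> nn0; field; rewrite nn0.
apply: ler_sum_nat => a /andP[ha1 ha2]. apply: ler_sum_nat => b /andP[hb1 hb2].
apply: Hphi; first by rewrite muln_gt0.
  apply: (@in_sq a0 a (2 * n) X hx1 hx2); first exact: leq_trans ha1.
  apply: leq_trans (ltnW ha2) la2.
apply: (@in_sq b0 b (2 * n) Y hy1 hy2); first exact: leq_trans hb1.
apply: leq_trans (ltnW hb2) lb2.
Qed.

Lemma grid_sum (j : nat) : forall a0 b0 : nat,
  a0%:R * h <= X -> X < (a0 + 2 ^ j)%:R * h ->
  b0%:R * h <= Y -> Y < (b0 + 2 ^ j)%:R * h ->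
  3 / 100 * j%:R <= \sum_(a0 <= a < a0 + 2 ^ j) \sum_(b0 <= b < b0 + 2 ^ j) phi a b.
Proof.
elim: j => [|j IH] a0 b0 hx1 hx2 hy1 hy2.
  by rewrite mulr0; apply: sumr_ge0 => a _; apply: sumr_ge0.
pose n := (2 ^ j)%N.
have n0 : (0 < n)%N by rewrite expn_gt0.
have e2 : (2 ^ j.+1 = n + n)%N by rewrite expnS mul2n -addnn.
have e2' : (2 * n = n + n)%N by rewrite mul2n -addnn.
rewrite e2 (addnA a0) (addnA b0).
rewrite (@big_cat_nat _ _ _ (a0 + n)) ?leq_addr //=.
have split_in : forall a, \sum_(b0 <= b < b0 + n + n) phi a b =
   \sum_(b0 <= b < b0 + n) phi a b + \sum_(b0 + n <= b < b0 + n + n) phi a b.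
  by move=> a; rewrite (@big_cat_nat _ _ _ (b0 + n)) ?leq_addr.
rewrite (eq_bigr _ (fun a _ => split_in a)) (eq_bigr _ (fun a _ => split_in a)).
rewrite !big_split /=.
move: hx2 hy2; rewrite e2 => hx2 hy2.
have hx2' : X < (a0 + 2 * n)%:R * h by rewrite e2'.
have hy2' : Y < (b0 + 2 * n)%:R * h by rewrite e2'.
have Q00 := @grid_quadrant a0 b0 a0 b0 n n0 hx1 hx2' hy1 hy2'.
have Q01 := @grid_quadrant a0 b0 a0 (b0 + n) n n0 hx1 hx2' hy1 hy2'.
have Q10 := @grid_quadrant a0 b0 (a0 + n) b0 n n0 hx1 hx2' hy1 hy2'.
have Q11 := @grid_quadrant a0 b0 (a0 + n) (b0 + n) n n0 hx1 hx2' hy1 hy2'.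
have Q00' := Q00 (leqnn _) (aux1 _ _) (leqnn _) (aux1 _ _).
have Q01' := Q01 (leqnn _) (aux1 _ _) (leq_addr _ _) (aux2 _ _).
have Q10' := Q10 (leq_addr _ _) (aux2 _ _) (leqnn _) (aux1 _ _).
have Q11' := Q11 (leq_addr _ _) (aux2 _ _) (leq_addr _ _) (aux2 _ _).
have Hj : ((j.+1)%:R : R) = j%:R + 1 by rewrite -addn1 natrD.
have hx3 : X < (a0 + n + n)%:R * h by rewrite -addnA.
have hy3 : Y < (b0 + n + n)%:R * h by rewrite -addnA.
case: (ltP X ((a0 + n)%:R * h)) => hx; case: (ltP Y ((b0 + n)%:R * h)) => hy.
- have := IH a0 b0 hx1 hx hy1 hy; lra.
- have := IH a0 (b0 + n) hx1 hx hy hy3; lra.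
- have := IH (a0 + n) b0 hx hx3 hy1 hy; lra.
- have := IH (a0 + n) (b0 + n) hx hx3 hy hy3; lra.
Qed.
End Grid.
Section CM.
Variable R : realType.
Implicit Types x y z : Cx R.

Lemma cmod_ge0 z : 0 <= cmod z.
Proof. by case: z => a b; rewrite /cmod /= sqrtr_ge0. Qed.

Lemma cmodN z : cmod (- z) = cmod z.
Proof. exact: normcN. Qed.

Lemma cmodD x y : cmod (x + y) <= cmod x + cmod y.
Proof. exact: le_normcD. Qed.

Lemma cmod_eq0 z : cmod z = 0 -> z = 0.
Proof. exact: ComplexField.Normc.eq0_normc. Qed.

Lemma cmodB x y : cmod (x - y) = cmod (y - x).
Proof. by rewrite -cmodN opprB. Qed.

Lemma cmod_tri x y w : cmod (x - y) <= cmod (x - w) + cmod (w - y).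
Proof. by have := cmodD (x - w) (w - y); rewrite addrA subrK. Qed.

Lemma cmod_ReIm (a b : R) : cmod (a +i* b)%C <= `|a| + `|b|.
Proof.
rewrite /cmod /=.
rewrite -(@ger0_norm _ (`|a| + `|b|)) ?addr_ge0 //.
rewrite -sqrtr_sqr; apply: ler_wsqrtr.
rewrite sqrrD !real_normK ?num_real //.
have : 0 <= `|a| * `|b| *+ 2 by rewrite mulrn_wge0 // mulr_ge0.
lra.
Qed.

Lemma Re_le z : `|complex.Re z| <= cmod z.
Proof.
case: z => a b; rewrite /cmod /=.
rewrite -sqrtr_sqr; apply: ler_wsqrtr.
rewrite ?real_normK ?num_real //.
have := sqr_ge0 b; lra.
Qed.

Lemma Im_le z : `|complex.Im z| <= cmod z.
Proof.
case: z => a b; rewrite /cmod /=.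
rewrite -sqrtr_sqr; apply: ler_wsqrtr.
rewrite ?real_normK ?num_real //.
have := sqr_ge0 a; lra.
Qed.

Lemma cmod_real (r : R) : cmod (r%:C)%C = `|r|.
Proof. by rewrite /cmod /= expr0n /= addr0 sqrtr_sqr. Qed.

Lemma normC_cmod z : `|z| = (cmod z)%:C%C.
Proof. by case: z. Qed.

Lemma closure_cmod (A : set (Cx R)) z e : closure A z -> 0 < e ->
  exists y, A y /\ cmod (z - y) < e.
Proof.
move=> cz e0.
have e0' : (0 : Cx R) < (e%:C)%C by rewrite ltcR.
have [y [Ay]] := cz _ (nbhsx_ballx z _ e0').
rewrite -ball_normE /ball_ /= normC_cmod ltcR => hy.
by exists y.
Qed.
End CM.

Section Tail.
Variable R : realType.
Variable lam : nat -> Cx R.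

Lemma tail_close z : closure (range lam) z -> ~ range lam z ->
  forall m e, 0 < e -> exists i, (m <= i)%N /\ cmod (z - lam i) < e.
Proof.
move=> cz nz; elim=> [|m IH] e e0.
  have [y [[i _ <-] hy]] := closure_cmod cz e0.
  by exists i.
have dm : 0 < cmod (z - lam m).
  rewrite lt_neqAle cmod_ge0 andbT; apply/eqP => /esym /cmod_eq0 /eqP.
  rewrite subr_eq0 => /eqP zm; apply: nz; by exists m.
have hmin : 0 < Order.min e (cmod (z - lam m)) by rewrite lt_min e0 dm.
have [i [mi hi]] := IH _ hmin.
exists i; split.
  rewrite ltn_neqAle mi andbT; apply/eqP => im; move: hi; rewrite -im.
  by rewrite lt_min ltxx andbF.
by move: hi; rewrite lt_min => /andP[].
Qed.

Lemma pick_idx m (g : Cx R) (t : R) : 0 < t -> exists i, (m <= i)%N /\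
  forall z, closure (range lam) z -> ~ range lam z ->
    cmod (lam i - g) <= cmod (z - g) + t.
Proof.
move=> t0.
pose E := [set cmod (lam i - g) | i in [set i | (m <= i)%N]].
have lbE : lbound E 0 by move=> _ [i _ <-]; exact: cmod_ge0.
have hE : has_inf E.
  split; first by exists (cmod (lam m - g)); exists m => //=.
  by exists 0.
have [_ [i mi <-] hi] := inf_adherent t0 hE.
exists i; split => // z cz nz.
suff : inf E <= cmod (z - g) by lra.
apply/ler_addgt0Pr => e e0.
have [j [mj hj]] := tail_close cz nz m e0.
have : inf E <= cmod (lam j - g) by apply: ge_inf; [exists 0 | exists j].
have := cmod_tri (lam j) g z.
rewrite (cmodB (lam j) z).
lra.
Qed.
End Tail.

Section Misc.
Variable R : realType.

Lemma sum_ind (x N : nat) (F : nat -> R) :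
  \sum_(0 <= i < N) (if x == i then F i else 0) = if (x < N)%N then F x else 0.
Proof.
elim: N => [|N IH]; first by rewrite big_geq.
rewrite big_nat_recr //= IH ltnS.
have [->|xN] := eqVneq x N; first by rewrite ltnn leqnn add0r.
by rewrite /= addr0 ltn_neqAle xN.
Qed.

Lemma geom2 N : \sum_(0 <= m < N) ((2 ^ m)%:R : R)^-1 = 2 - 2 * ((2 ^ N)%:R)^-1.
Proof.
elim: N => [|N IH]; first by rewrite big_geq // expn0 invr1 mulr1 subrr.
rewrite big_nat_recr //= IH expnS natrM.
have : ((2 ^ N)%:R : R) != 0 by rewrite pnatr_eq0 expn_eq0.
by move=> h; field; rewrite h.
Qed.

Lemma geom2_le N : \sum_(0 <= m < N) ((2 ^ m)%:R : R)^-1 <= 2.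
Proof.
rewrite geom2; have : 0 <= ((2 ^ N)%:R : R)^-1 by rewrite invr_ge0.
lra.
Qed.
End Misc.

Lemma sub_complex (R : realType) (z : Cx R) (x y : R) :
  z - (x +i* y)%C = ((complex.Re z - x) +i* (complex.Im z - y))%C.
Proof. by case: z. Qed.

Lemma mass_eq (R : realType) (A kk : R) (N : nat) : (N%:R : R) != 0 -> kk != 0 ->
  (2 * A / N%:R) ^+ 2 / kk *+ N *+ N = 4 * A ^+ 2 * kk^-1.
Proof. by move=> h1 h2; rewrite -mulrnA -[_ *+ (N * N)]mulr_natr natrM; field; rewrite h1 h2. Qed.

Theorem proposition5 (R : realType) (lam : nat -> Cx R) :
  bounded_diag lam ->
  (forall i j : nat, i <> j -> lam i <> lam j) ->
  perfect_set (spec_diag lam) ->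
  compact (spec_diag lam) ->
  exists u : nat -> Cx R,
    u \in @l2 R /\
    (forall i : nat, u i <> 0) /\
    (forall z : Cx R, z \in spec_diag lam `\` pspec_diag lam ->
       (\sum_(0 <= i <oo)
          ((cmod (u i) ^+ 2 / cmod (z - lam i) ^+ 2)%:E) = +oo)%E).
Proof.
move=> [M hM] _ _ _.
have M0 : 0 <= M := le_trans (cmod_ge0 (lam 0)) (hM 0).
pose A := M + 2.
have A0 : 0 < A by rewrite /A; lra.
pose k m := (2 ^ m)%N.
pose n m := (2 ^ k m)%N.
pose h m : R := 2 * A / (n m)%:R.
have n0 m : 0 < ((n m)%:R : R) by rewrite ltr0n expn_gt0.
have k0 m : 0 < ((k m)%:R : R) by rewrite ltr0n expn_gt0.
have h0 m : 0 < h m by rewrite divr_gt0 // mulr_gt0.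
pose g m (a b : nat) : Cx R := ((- A + a%:R * h m) +i* (- A + b%:R * h m))%C.
have [idx Hidx] := @boolp.choice _ _ (fun (p : nat * nat * nat) i =>
  (p.1.1 <= i)%N /\ forall z, closure (range lam) z -> ~ range lam z ->
  cmod (lam i - g p.1.1 p.1.2 p.2) <= cmod (z - g p.1.1 p.1.2 p.2) + h p.1.1)
  (fun p => pick_idx lam p.1.1 (g p.1.1 p.1.2 p.2) (h0 p.1.1)).
pose idx3 m a b := idx (m, a, b).
pose w m : R := (h m) ^+ 2 / (k m)%:R.
have w0 m : 0 <= w m by rewrite divr_ge0 ?sqr_ge0 // ltW.
pose c m i : R := \sum_(0 <= a < n m) \sum_(0 <= b < n m)
   (if idx3 m a b == i then w m else 0).
have c0 m i : 0 <= c m i.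
  by apply: sumr_ge0 => a _; apply: sumr_ge0 => b _; case: eqP.
have cZ m i : (i < m)%N -> c m i = 0.
  move=> im; apply: big1 => a _; apply: big1 => b _.
  have [hb _] := Hidx (m, a, b).
  case: eqP => // e; move: hb; rewrite /= -/(idx3 m a b) e => mi.
  by move: (leq_ltn_trans mi im); rewrite ltnn.
pose Cc i : R := ((2 ^ i)%:R)^-1 + \sum_(0 <= m < i.+1) c m i.
have Cc0 i : 0 < Cc i.
  rewrite /Cc ltr_pwDl ?invr_gt0 ?ltr0n ?expn_gt0 //.
  by apply: sumr_ge0 => m _.
have cmu i : cmod ((Num.sqrt (Cc i))%:C)%C ^+ 2 = Cc i.
  by rewrite cmod_real ger0_norm ?sqrtr_ge0 // sqr_sqrtr // ltW.
have mass m N : \sum_(0 <= i < N) c m i <= 4 * A ^+ 2 * ((2 ^ m)%:R)^-1.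
  rewrite /c exchange_big_nat.
  apply: (@le_trans _ _ (\sum_(0 <= a < n m) \sum_(0 <= b < n m) w m)).
    apply: ler_sum_nat => a _; rewrite exchange_big_nat; apply: ler_sum_nat => b _.
    by rewrite sum_ind; case: ifP => // _; exact: w0.
  rewrite !sumr_const_nat subn0 /w /h.
  by rewrite mass_eq ?lt0r_neq0 // pnatr_eq0 expn_eq0.
exists (fun i => (Num.sqrt (Cc i))%:C%C).
split; [|split].
- rewrite in_setE /l2 /=.
  apply: (@le_lt_trans _ _ (2 + 8 * A ^+ 2)%:E); last exact: ltry.
  apply: lime_le; first by apply: is_cvg_nneseries => i _ _; rewrite lee_fin sqr_ge0.
  apply: nearW => N; rewrite sumEFin lee_fin.
  under eq_bigr do rewrite cmu.
  rewrite big_split /=.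
  have g2 := geom2_le R N.
  have : \sum_(0 <= i < N) \sum_(0 <= m < i.+1) c m i <= 8 * A ^+ 2.
    apply: (@le_trans _ _ (\sum_(0 <= i < N) \sum_(0 <= m < N) c m i)).
      apply: ler_sum_nat => i /andP[_ iN].
      rewrite (@big_cat_nat _ _ _ i.+1 0 N) //= lerDl.
      by apply: sumr_ge0 => m _.
    rewrite exchange_big_nat.
    apply: (@le_trans _ _ (\sum_(0 <= m < N) 4 * A ^+ 2 * ((2 ^ m)%:R)^-1)).
      by apply: ler_sum_nat => m _; exact: mass.
    rewrite -mulr_sumr.
    have : 0 <= 4 * A ^+ 2 by rewrite mulr_ge0 ?sqr_ge0.
    have := geom2_le R N; nra.
  lra.
- move=> i [] /eqP; by rewrite sqrtr_eq0 leNgt Cc0.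
- move=> z; rewrite in_setE => -[cz nz].
  rewrite /spec_diag in cz; rewrite /pspec_diag in nz.
  have dpos i : 0 < cmod (z - lam i).
    rewrite lt_neqAle cmod_ge0 andbT; apply/eqP => /esym /cmod_eq0 /eqP.
    rewrite subr_eq0 => /eqP zi; apply: nz; by exists i.
  pose d i := cmod (z - lam i) ^+ 2.
  have d0 i : 0 < d i by rewrite /d exprn_gt0.
  have [y [[j _ <-] hy]] := closure_cmod cz (@ltr01 R).
  have zb : cmod z < M + 1.
    have := cmodD (z - lam j) (lam j); rewrite subrK.
    have := hM j; lra.
  have ReB : `|complex.Re z| < M + 1 by apply: le_lt_trans (Re_le z) zb.
  have ImB : `|complex.Im z| < M + 1 by apply: le_lt_trans (Im_le z) zb.
  move: ReB ImB; rewrite !ltr_norml => /andP[Re1 Re2] /andP[Im1 Im2].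
  have nh m : ((0 + 2 ^ k m)%N)%:R * h m = 2 * A.
    by rewrite add0n /h mulrC divfK // lt0r_neq0.
  have block m : 3 / 100 <= \sum_(0 <= a < n m) \sum_(0 <= b < n m) w m / d (idx3 m a b).
    pose phi a b := h m ^+ 2 / d (idx3 m a b).
    have phi0 a b : 0 <= phi a b by rewrite divr_ge0 ?sqr_ge0 // ltW.
    have Hphi a b (N : nat) : (0 < N)%N ->
        `|complex.Re z + A - a%:R * h m| <= N%:R * h m ->
        `|complex.Im z + A - b%:R * h m| <= N%:R * h m ->
        (25 * N%:R ^+ 2)^-1 <= phi a b.
      move=> N0 ha hb.
      have [_ Hi] := Hidx (m, a, b).
      have Hz := Hi z cz nz; rewrite /= in Hz.
      have Hzg : cmod (z - g m a b) <= 2 * (N%:R * h m).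
        rewrite /g sub_complex; apply: le_trans (cmod_ReIm _ _) _.
        have -> : complex.Re z - (- A + a%:R * h m) = complex.Re z + A - a%:R * h m.
          by rewrite opprD opprK addrA.
        have -> : complex.Im z - (- A + b%:R * h m) = complex.Im z + A - b%:R * h m.
          by rewrite opprD opprK addrA.
        lra.
      have Hd : cmod (z - lam (idx3 m a b)) <= 5 * (N%:R * h m).
        have := cmod_tri z (lam (idx3 m a b)) (g m a b).
        rewrite (cmodB (g m a b)).
        have N1 : 1 <= (N%:R : R) by rewrite ler1n.
        have : h m <= N%:R * h m by rewrite ler_peMl // ltW.
        rewrite /idx3; lra.
      rewrite /phi /d ler_pdivlMr ?exprn_gt0 // mulrC ler_pdivrMr; last first.
        by rewrite mulr_gt0 // exprn_gt0 // ltr0n.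
      apply: (@le_trans _ _ ((5 * (N%:R * h m)) ^+ 2)).
        rewrite !expr2; apply: ler_pM => //; exact: cmod_ge0.
      by rewrite le_eqVlt; apply/orP; left; apply/eqP; ring.
    have hX1 : 0%:R * h m <= complex.Re z + A by rewrite mul0r /A; lra.
    have hX2 : complex.Re z + A < ((0 + 2 ^ k m)%N)%:R * h m by rewrite nh /A; lra.
    have hY1 : 0%:R * h m <= complex.Im z + A by rewrite mul0r /A; lra.
    have hY2 : complex.Im z + A < ((0 + 2 ^ k m)%N)%:R * h m by rewrite nh /A; lra.
    have Hg := grid_sum (h0 m) phi0 Hphi hX1 hX2 hY1 hY2.
    rewrite add0n in Hg.
    have -> : \sum_(0 <= a < n m) \sum_(0 <= b < n m) w m / d (idx3 m a b) =
       ((k m)%:R)^-1 * \sum_(0 <= a < n m) \sum_(0 <= b < n m) phi a b.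
      rewrite mulr_sumr; apply: eq_bigr => a _; rewrite mulr_sumr; apply: eq_bigr => b _.
      by rewrite /phi /w mulrCA mulrA.
    by rewrite [X in _ <= X]mulrC ler_pdivlMr.
  apply/eqyP => B B0.
  pose K := Num.Def.archi_bound (B * 34).
  have KB : B * 34 < K%:R by apply: archi_boundP; rewrite mulr_ge0 // ltW.
  pose N := (\max_(m < K) \max_(a < n m) \max_(b < n m) (idx3 m a b).+1)%N.
  have HN m a b : (m < K)%N -> (a < n m)%N -> (b < n m)%N -> (idx3 m a b < N)%N.
    move=> mK an bn.
    apply: (leq_trans _ (leq_bigmax (Ordinal mK))) => /=.
    apply: (leq_trans _ (leq_bigmax (Ordinal an))) => /=.
    exact: (leq_bigmax (Ordinal bn)).
  clearbody N K.
  apply: le_trans (nneseries_lim_ge N _); last first.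
    by move=> i _ _; rewrite lee_fin divr_ge0 ?sqr_ge0.
  rewrite sumEFin lee_fin.
  under eq_bigr do rewrite cmu.
  have step1 : \sum_(0 <= i < N) (\sum_(0 <= m < K) c m i) / d i <=
               \sum_(0 <= i < N) Cc i / cmod (z - lam i) ^+ 2.
    apply: ler_sum_nat => i _; apply: ler_wpM2r; first by rewrite invr_ge0 ltW.
    apply: (@le_trans _ _ (\sum_(0 <= m < i.+1) c m i)); last first.
      by rewrite /Cc lerDr invr_ge0 ler0n.
    case: (leqP K i.+1) => hK.
      rewrite (@big_cat_nat _ _ _ K 0 i.+1) //= lerDl.
      by apply: sumr_ge0 => m _.
    rewrite (@big_cat_nat _ _ _ i.+1 0 K _ _ (leq0n _) (ltnW hK)).
    have -> : \sum_(i.+1 <= m < K) c m i = 0.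
      by rewrite big_nat big1 // => m /andP[hm _]; exact: cZ.
    by rewrite /= addr0.
  apply: le_trans step1.
  have step2 : \sum_(0 <= i < N) (\sum_(0 <= m < K) c m i) / d i =
               \sum_(0 <= m < K) \sum_(0 <= i < N) c m i / d i.
    rewrite exchange_big_nat; apply: eq_bigr => i _; exact: mulr_suml.
  rewrite step2.
  have step3 m : (m < K)%N -> 3 / 100 <= \sum_(0 <= i < N) c m i / d i.
    move=> mK.
    have E1 i : c m i / d i = \sum_(0 <= a < n m) \sum_(0 <= b < n m)
        (if idx3 m a b == i then w m / d i else 0).
      rewrite /c mulr_suml; apply: eq_bigr => a _; rewrite mulr_suml.
      by apply: eq_bigr => b _; case: eqP => _; rewrite ?mul0r.
    rewrite (eq_bigr _ (fun i _ => E1 i)) exchange_big_nat.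
    have -> : \sum_(0 <= a < n m) \sum_(0 <= i < N) \sum_(0 <= b < n m)
        (if idx3 m a b == i then w m / d i else 0) =
        \sum_(0 <= a < n m) \sum_(0 <= b < n m) w m / d (idx3 m a b).
      apply: eq_big_nat => a /andP[_ ha]; rewrite exchange_big_nat.
      apply: eq_big_nat => b /andP[_ hb].
      by rewrite (sum_ind (idx3 m a b) N (fun i => w m / d i)) HN.
    exact: block.
  apply: (@le_trans _ _ (\sum_(0 <= m < K) (3 / 100 : R))).
    rewrite sumr_const_nat subn0 -mulr_natr; lra.
  by apply: ler_sum_nat => m /andP[_ mK]; exact: step3.
Qed.
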